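(* Let $R$ be a noetherian integral domain, $n\ge1$, $R[n]=R[t]/(t^n)$, and $M$ an $R[n]$-module of finite type. Then $\mathrm{Ext}^1_{R[n]}(M,R[n])$ is a torsion module.
   Context: An element $u=\sum_{i=0}^{n-1}u_it^i\in R[n]$ ($u_i\in R$) is a non-zero-divisor iff $u_0\ne0$; let $S_n$ be the set of non-zero-divisors. For an $R[n]$-module $N$, the torsion submodule $T(N)$ is the set of $m\in N$ such that $\alpha m=0$ for some $\alpha\in S_n$; $N$ is a torsion module if $N=T(N)$. *)

(* Defs.v *)
From HB Require Import structures.
From mathcomp Require Import all_boot all_order all_algebra.
Set Implicit Arguments. Unset Strict Implicit. Unset Printing Implicit Defensive.
Import GRing.Theory.
Local Open Scope ring_scope.

(* R[n] = R[t]/(t^n), realised as MathComp's quotient ring {poly %/ 'X^n}.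
   (For n = 0 MathComp's construction degenerates to R[t]/(t); the theorem
   assumes 0 < n, as in the paper.) *)
Definition Rn (R : comNzRingType) (n : nat) := {poly %/ ('X^n : {poly R})}.

Definition is_ideal (R : comNzRingType) (I : R -> Prop) : Prop :=
  [/\ I 0, (forall x y, I x -> I y -> I (x + y)) & (forall r x, I x -> I (r * x))].

Definition noetherian (R : comNzRingType) : Prop :=
  forall I : R -> Prop, is_ideal I ->
    exists s : seq R, forall x, I x <->
      exists c : 'I_(size s) -> R, x = \sum_(i < size s) c i * s`_i.

Definition nzd (A : comNzRingType) (a : A) : Prop :=
  forall b : A, a * b = 0 -> b = 0.

Definition generates (A : comNzRingType) (M : lmodType A) (k : nat)
  (x : 'I_k -> M) : Prop :=
  forall m : M, exists c : 'I_k -> A, m = \sum_(i < k) c i *: x i.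

Definition finite_type (A : comNzRingType) (M : lmodType A) : Prop :=
  exists k (x : 'I_k -> M), generates x.

Definition relmod (A : comNzRingType) (M : lmodType A) (k : nat)
  (x : 'I_k -> M) (u : 'rV[A]_k) : Prop :=
  \sum_(i < k) u 0 i *: x i = 0.

(* Given the presentation 0 -> K -> A^k -> M -> 0, one has
   Ext^1_A(M, A) = coker (Hom_A(A^k, A) -> Hom_A(K, A)).
   Ext^1_A(M,A) is torsion iff for every A-linear f : K -> A there is a
   non-zero-divisor alpha with alpha * f extending to an A-linear map
   A^k -> A (given by a column vector c). *)
Definition ext1_torsion_wrt (A : comNzRingType) (M : lmodType A) (k : nat)
  (x : 'I_k -> M) : Prop :=
  forall f : 'rV[A]_k -> A,
    (forall u v, relmod x u -> relmod x v -> f (u + v) = f u + f v) ->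
    (forall (a : A) u, relmod x u -> f (a *: u) = a * f u) ->
    exists alpha : A, nzd alpha /\
      exists c : 'cV[A]_k, forall u, relmod x u -> alpha * f u = (u *m c) 0 0.

(* Ext^1_A(M, A) is a torsion module (computed from any finite presentation;
   the answer is independent of the presentation). *)
Definition Ext1_torsion (A : comNzRingType) (M : lmodType A) : Prop :=
  forall k (x : 'I_k -> M), generates x -> ext1_torsion_wrt x.

(* Main.v *)
Require Import Defs.
From HB Require Import structures.
From mathcomp Require Import all_boot all_order all_algebra.
Local Open Scope ring_scope.
From Stdlib Require Import Classical.
From mathcomp Require Import zify.
Set Implicit Arguments. Unset Strict Implicit. Unset Printing Implicit Defensive.
Import GRing.Theory.
Local Open Scope ring_scope.
Local Open Scope quotient_scope.
Notation tof := (@FracField.tofrac _).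

Lemma frac_repr (R : idomainType) (x : {fraction R}) :
  exists a b, b != 0 /\ x * tof b = tof a.
Proof.
elim/quotW: x => r.
exists \n_r, \d_r; split; first exact: denom_ratioP.
rewrite !piE.
apply/eqmodP; rewrite /= FracField.equivfE /FracField.mulf /= !numden_Ratio ?oner_neq0 ?mulf_neq0 ?denom_ratioP //.
  by rewrite !mulr1 mulrC.
exact: oner_neq0. exact: oner_neq0.
Qed.

Lemma tof_inj (R : idomainType) (a b : R) : tof a = tof b -> a = b.
Proof. by move/eqP; rewrite tofrac_eq => /eqP. Qed.

Lemma clear_den (R : idomainType) (r : nat) (q : 'I_r -> {fraction R}) :
  exists2 e : R, e != 0 & exists w : 'I_r -> R, forall i, tof (w i) = tof e * q i.
Proof.
have : forall i, exists ab : R * R, ab.2 != 0 /\ q i * tof ab.2 = tof ab.1.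
  by move=> i; have [a [b [hb h]]] := frac_repr (q i); exists (a, b).
case/fin_all_exists => ab hab.
exists (\prod_i (ab i).2).
  by rewrite prodf_seq_neq0; apply/allP => i _; case: (hab i).
exists (fun i => (ab i).1 * \prod_(j | j != i) (ab j).2) => i.
rewrite rmorphM /= !rmorph_prod /= [in RHS](bigD1 i) //= -(proj2 (hab i)).
by rewrite [RHS]mulrC mulrA.
Qed.
Section Core.
Variables (R : idomainType) (I : finType) (V : zmodType) (P : V -> Prop)
  (scal : R -> V -> V) (coord : V -> I -> R) (phi : V -> R).
Hypotheses (P0 : P 0) (PD : forall u v, P u -> P v -> P (u + v))
  (PZ : forall a u, P u -> P (scal a u))
  (cD : forall u v i, coord (u + v) i = coord u i + coord v i)
  (cZ : forall a u i, coord (scal a u) i = a * coord u i)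
  (cI : forall u v, P u -> P v -> (forall i, coord u i = coord v i) -> u = v)
  (phiD : forall u v, P u -> P v -> phi (u + v) = phi u + phi v)
  (phiZ : forall a u, P u -> phi (scal a u) = a * phi u).

Local Notation F := {fraction R}.
Local Notation m := #|I|.

Definition cq (u : V) : 'rV[F]_m := \row_j tof (coord u (enum_val j)).
Definition Bm (s : seq V) : 'M[F]_(size s, m) := \matrix_(i < size s) cq s`_i.
Definition ycol (s : seq V) : 'cV[F]_(size s) := \col_(i < size s) tof (phi s`_i).

Lemma coord0 i : coord 0 i = 0.
Proof.
have h := cD 0 0 i; rewrite addr0 in h.
by apply: (@addrI _ (coord 0 i)); rewrite addr0 -h.
Qed.

Lemma phi0 : phi 0 = 0.
Proof.
have h := phiD P0 P0; rewrite addr0 in h.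
by apply: (@addrI _ (phi 0)); rewrite addr0 -h.
Qed.

Lemma sum_props r (G : 'I_r -> V) (w : 'I_r -> R) : (forall i, P (G i)) ->
  [/\ P (\sum_i scal (w i) (G i)),
      forall j, coord (\sum_i scal (w i) (G i)) j = \sum_i w i * coord (G i) j &
      phi (\sum_i scal (w i) (G i)) = \sum_i w i * phi (G i)].
Proof.
move=> PG; split.
- by apply: big_ind => // i _; apply: PZ.
- move=> j; apply: (big_ind2 (fun (a : V) (b : R) => coord a j = b)).
  + exact: coord0.
  + by move=> x1 x2 y1 y2 <- <-; rewrite cD.
  + by move=> i _; rewrite cZ.
- have: P (\sum_i scal (w i) (G i)) /\ phi (\sum_i scal (w i) (G i)) = \sum_i w i * phi (G i).
    apply: (big_ind2 (fun (a : V) (b : R) => P a /\ phi a = b)).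
    + by split => //; exact: phi0.
    + by move=> x1 x2 y1 y2 [P1 <-] [P2 <-]; split; [apply: PD | apply: phiD].
    + by move=> i _; split; [apply: PZ | apply: phiZ].
  by case.
Qed.

Lemma key (s : seq V) (Ps : forall i : 'I_(size s), P s`_i) (z : 'rV[F]_(size s)) u :
  P u -> cq u = z *m Bm s -> tof (phi u) = (z *m ycol s) 0 0.
Proof.
move=> Pu hz.
have [e e0 [w hw]] := clear_den (fun i => z 0 i).
have [P2 c2 p2] := sum_props w Ps.
have hc : forall j, coord (scal e u) j = coord (\sum_i scal (w i) s`_i) j.
  move=> j; rewrite cZ c2; apply: tof_inj.
  move/matrixP: hz => /(_ 0 (enum_rank j : 'I_m)) hz.
  move: hz; rewrite !mxE enum_rankK => hz.
  rewrite rmorphM /= hz rmorph_sum big_distrr /=; apply: eq_bigr => i _.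
  by rewrite rmorphM /= hw !mxE enum_rankK mulrA.
have := cI (PZ e Pu) P2 hc.
move/(congr1 phi); rewrite phiZ // p2 => /(congr1 tof).
rewrite rmorphM rmorph_sum /= mxE.
under eq_bigr do rewrite rmorphM /= hw.
under eq_bigr do rewrite -mulrA.
rewrite -big_distrr /= => /(mulfI _) -> //; last by rewrite tofrac_eq0.
by apply: eq_bigr => i _; rewrite mxE.
Qed.

Lemma span_exists : exists s : seq V, (forall i : 'I_(size s), P s`_i) /\ forall u, P u -> (cq u <= Bm s)%MS.
Proof.
suff H : forall j (s : seq V), (forall i : 'I_(size s), P s`_i) ->
    (m - \rank (Bm s) <= j)%N -> exists s : seq V, (forall i : 'I_(size s), P s`_i) /\
  forall u, P u -> (cq u <= Bm s)%MS.
  by apply: (H m [::]) => //; [case | rewrite leq_subr].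
elim=> [|j IH] s Ps hr;
  (case: (classic (exists u, P u /\ ~~ (cq u <= Bm s)%MS)) => [[u [Pu nu]] | nex];
   last by exists s; split => // v Pv; apply/negPn/negP => h; apply: nex; exists v).
all: set s' := u :: s.
all: have Ps' : forall i : 'I_(size s'), P s'`_i by
  (case=> [[|i] hi]; [exact: Pu | have := Ps (Ordinal (hi : (i < size s)%N)); exact]).
all: have sub1 : (Bm s <= Bm s')%MS by
  apply/row_subP => i; rewrite rowK;
  have := row_sub (Ordinal (ltn_ord i : (i.+1 < size s')%N)) (Bm s'); rewrite rowK.
all: have sub2 : (cq u <= Bm s')%MS by
  have := row_sub (Ordinal (ltn0Sn (size s) : (0 < size s')%N)) (Bm s'); rewrite rowK.
all: have lt : (\rank (Bm s) < \rank (Bm s'))%N by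
  rewrite (ltn_leqif (mxrank_leqif_sup sub1)); apply/negP => h;
  move/negP: nu; apply; exact: submx_trans sub2 h.
all: have := rank_leq_col (Bm s').
- by move=> hc; move: hr lt hc; rewrite leqn0 subn_eq0 => hr lt hc;
     have := leq_trans lt hc; rewrite ltnNge hr.
- move=> hc; apply: (IH s' Ps'); move: hr lt hc; clear; lia.
Qed.

Theorem core : exists2 d : R, d != 0 & exists gamma : I -> R,
  forall u, P u -> d * phi u = \sum_i coord u i * gamma i.
Proof.
have [s [Ps Hs]] := span_exists.
have cons : forall z : 'rV[F]_(size s), z *m (Bm s) = 0 -> z *m (ycol s) = 0.
  move=> z hz; apply/rowP => i; rewrite ord1.
  rewrite -(key Ps P0) ?phi0 ?mxE //; apply/rowP => j; rewrite hz !mxE coord0.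
  exact: rmorph0.
have sub : ((ycol s)^T <= (Bm s)^T)%MS.
  rewrite submxE; apply/eqP.
  pose Z := (cokermx (Bm s)^T)^T.
  have ZB : Z *m (Bm s) = 0 by rewrite /Z -[X in _ *m X]trmxK -trmx_mul mulmx_coker trmx0.
  have : Z *m (ycol s) = 0.
    apply/row_matrixP => i; rewrite row_mul row0; apply: cons.
    by rewrite -row_mul ZB row0.
  by move/(congr1 trmx); rewrite trmx_mul trmxK trmx0.
pose gF : 'cV[F]_m := ((ycol s)^T *m pinvmx (Bm s)^T)^T.
have BgF : Bm s *m gF = ycol s.
  apply: (can_inj (@trmxK _ _ _)); rewrite trmx_mul /gF trmxK; exact: mulmxKpV sub.
have hu : forall u, P u -> tof (phi u) = (cq u *m gF) 0 0.
  move=> u Pu; have := mulmxKpV (Hs u Pu).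
  set z := cq u *m pinvmx (Bm s) => hz.
  by rewrite (key Ps Pu (esym hz)) -hz -(mulmxA z) BgF.
have [d d0 [g hg]] := clear_den (fun j => gF j 0).
exists d => //; exists (fun i => g (enum_rank i)) => u Pu.
apply: tof_inj; rewrite rmorphM /= hu // mxE rmorph_sum big_distrr /=.
rewrite [RHS](reindex (@enum_val I (pred_of_simpl predT))) /=; last exact: onW_bij (@enum_val_bij I).
apply: eq_bigr => j _; rewrite rmorphM /= enum_valK hg !mxE.
by rewrite mulrCA.
Qed.
End Core.

Import Pdiv.CommonRing Pdiv.RingMonic.
Section Inst.
Variables (R : idomainType) (n' : nat).
Local Notation N := n'.+1.
Local Notation A := (Rn R N).
Local Notation h := ('X^N : {poly R}).

Lemma mkXN : mk_monic h = h.
Proof. by rewrite mk_monic_Xn. Qed.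

Lemma sizeA (a : A) : (size (a : {poly R}) <= N)%N.
Proof.
have e : size (mk_monic h) = N.+1 by rewrite mkXN size_polyXn.
by have := leq_trans (size_mk_monic a) (eq_leq e).
Qed.

Lemma coef_rmodXn (p : {poly R}) j : (j < N)%N -> (rmodp p (mk_monic h))`_j = p`_j.
Proof.
move=> hj; rewrite mkXN.
have := Pdiv.RingMonic.rdivp_eq (monicXn R N) p.
move/(congr1 (fun q : {poly R} => q`_j)); rewrite coefD coefMXn hj add0r.
by move=> ->.
Qed.

Lemma valM (a b : A) : (a * b : A) = rmodp ((a : {poly R}) * b) (mk_monic h) :> {poly R}.
Proof. by []. Qed.

Lemma valZ (e : R) (a : A) : (e *: a : A) = e *: (a : {poly R}) :> {poly R}.
Proof. by []. Qed.

Lemma valD (a b : A) : (a + b : A) = (a : {poly R}) + b :> {poly R}.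
Proof. by []. Qed.

Lemma coef_big (a : A) j : (N <= j)%N -> (a : {poly R})`_j = 0.
Proof. by move=> hj; rewrite nth_default // (leq_trans (sizeA a)). Qed.

Definition tX (j : nat) : A := in_qpoly h ('X^(n' - j)).

Lemma val_tX j : (tX j : {poly R}) = 'X^(n' - j).
Proof.
by rewrite /tX in_qpoly_small // mkXN !size_polyXn ltnS ltnS leq_subr.
Qed.

Lemma L1 (b : A) j : (j < N)%N -> ((tX j * b : A) : {poly R})`_n' = (b : {poly R})`_j.
Proof.
move=> hj; rewrite valM coef_rmodXn // val_tX coefXnM.
rewrite ltnNge leq_subr /= subKn //.
Qed.


Lemma qinj (a b : A) : (a : {poly R}) = b -> a = b.
Proof. exact: val_inj. Qed.

Lemma valSum k (F : 'I_k -> A) : ((\sum_i F i : A) : {poly R}) = \sum_i (F i : {poly R}).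
Proof. by apply: (big_morph (fun a : A => (a : {poly R})) valD). Qed.

Definition cvec k (gamma : 'I_k * 'I_N -> R) : 'cV[A]_k :=
  \col_i in_qpoly h (\poly_(l < N) gamma (i, inord (n' - l))).

Lemma L2 k gamma (w : 'rV[A]_k) :
  (((w *m cvec gamma) 0 0 : A) : {poly R})`_n' =
  \sum_(p : 'I_k * 'I_N) ((w 0 p.1 : A) : {poly R})`_p.2 * gamma p.
Proof.
rewrite [RHS](eq_bigr (fun p : 'I_k * 'I_N => ((w 0 p.1 : A) : {poly R})`_p.2 * gamma (p.1, p.2))); last by case.
rewrite -(pair_bigA _ (fun (i : 'I_k) (j : 'I_N) => ((w 0 i : A) : {poly R})`_j * gamma (i, j))) /=.
rewrite mxE valSum coef_sum.
apply: eq_bigr => i _.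
rewrite valM coef_rmodXn // coefM.
apply: eq_bigr => j _.
rewrite /cvec.
rewrite mxE.
rewrite in_qpoly_small; last first.
  by rewrite mkXN size_polyXn ltnS size_poly.
rewrite coef_poly.
rewrite ltnS leq_subr.
rewrite (subKn (ltn_ord j : (j <= n')%N)).
by rewrite inord_val.
Qed.
End Inst.

Lemma relmod0 (B : comNzRingType) (M : lmodType B) k (x : 'I_k -> M) : relmod x 0.
Proof. by rewrite /relmod big1 // => i _; rewrite mxE scale0r. Qed.

Lemma relmodD (B : comNzRingType) (M : lmodType B) k (x : 'I_k -> M) u v :
  relmod x u -> relmod x v -> relmod x (u + v).
Proof.
rewrite /relmod => hu hv.
under eq_bigr do rewrite mxE scalerDl.
by rewrite big_split /= hu hv addr0.
Qed.

Lemma relmodZ (B : comNzRingType) (M : lmodType B) k (x : 'I_k -> M) a u :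
  relmod x u -> relmod x (a *: u).
Proof.
rewrite /relmod => hu.
under eq_bigr do rewrite mxE -scalerA.
by rewrite -scaler_sumr hu scaler0.
Qed.

Unset Implicit Arguments.
Local Close Scope quotient_scope.
Theorem proposition3p4p2 (R : idomainType) (n : nat) (Rnoeth : noetherian R)
  (hn : (0 < n)%N) (M : lmodType (Rn R n)) (hM : finite_type M) :
  Ext1_torsion M.
Proof.
case: n hn M hM => [//|n'] _ M _ k x _ f fD fZ.
pose N := n'.+1.
pose scal (e : R) (u : 'rV[Rn R N]_k) := (e%:A : Rn R N) *: u.
pose coord (u : 'rV[Rn R N]_k) (p : 'I_k * 'I_N) := ((u 0 p.1 : Rn R N) : {poly R})`_p.2.
pose phi (u : 'rV[Rn R N]_k) := ((f u : Rn R N) : {poly R})`_n'.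
have cD : forall u v i, coord (u + v) i = coord u i + coord v i.
  by move=> u v i; rewrite /coord mxE valD coefD.
have cZ : forall a u i, coord (scal a u) i = a * coord u i.
  by move=> a u i; rewrite /coord /scal mxE mulr_algl valZ coefZ.
have cI : forall u v, relmod x u -> relmod x v -> (forall i, coord u i = coord v i) -> u = v.
  move=> u v _ _ hc; apply/rowP => i; apply: val_inj; apply/polyP => j.
  case: (ltnP j N) => hj; first exact: (hc (i, Ordinal hj)).
  by rewrite !coef_big.
have phiD : forall u v, relmod x u -> relmod x v -> phi (u + v) = phi u + phi v.
  by move=> u v hu hv; rewrite /phi fD // valD coefD.
have phiZ : forall a u, relmod x u -> phi (scal a u) = a * phi u.
  by move=> a u hu; rewrite /phi /scal fZ // mulr_algl valZ coefZ.
have [d d0 [gamma hg]] := @core R ('I_k * 'I_N)%type _ (relmod x) scal coord phi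
  (relmod0 x) (@relmodD _ _ _ x) (fun a u => @relmodZ _ _ _ x _ u) cD cZ cI phiD phiZ.
exists (d%:A); split.
  move=> b; rewrite mulr_algl => hb; apply: val_inj.
  have : d *: (b : {poly R}) = 0 := congr1 (fun a : Rn R N => (a : {poly R})) hb.
  move/eqP.
  by rewrite scale_poly_eq0 (negPf d0) /= => /eqP.
exists (cvec gamma) => u hu.
apply: (@qinj R n'); apply/polyP => j; rewrite mulr_algl valZ coefZ.
case: (ltnP j N) => hj; last by rewrite !coef_big ?mulr0.
rewrite -(L1 _ hj) -fZ //.
have := hg _ (relmodZ (@tX R n' j) hu); rewrite /phi /coord => ->.
rewrite -(L1 _ hj).
have -> : @tX R n' j * (u *m cvec gamma) 0 0 = ((@tX R n' j *: u) *m cvec gamma) 0 0.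
  by rewrite -scalemxAl [in RHS]mxE.
by rewrite L2.
Qed.
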